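(* For every integer $r$ and every integer $n\ge 0$, \[ 2\sum_{j=0}^{n}(-1)^{rj}4^jF_r^{2n-2j}5^{n-j}=\sum_{j=0}^{n}\left(\frac{L_r^2}{2}\right)^j\left(5^{n-j}F_r^{2(n-j)}+(-1)^{r(n-j)}4^{n-j}\right)=2\,\frac{(5F_r^2)^{n+1}-(-1)^{r(n+1)}4^{n+1}}{5F_r^2-(-1)^r4}. \]
   Context: $F_n$ and $L_n$ denote the Fibonacci and Lucas numbers, defined for all integers $n$ by $F_0=0,F_1=1$, $L_0=2,L_1=1$ and $x_n=x_{n-1}+x_{n-2}$; equivalently $F_n=(\alpha^n-\beta^n)/(\alpha-\beta)$, $L_n=\alpha^n+\beta^n$ with $\alpha=(1+\sqrt5)/2$, $\beta=(1-\sqrt5)/2$. In particular $F_{-n}=(-1)^{n-1}F_n$ and $L_{-n}=(-1)^nL_n$. *)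

(* Defs.v *)
From HB Require Import structures.
From mathcomp Require Import all_boot all_order all_algebra.
Set Implicit Arguments. Unset Strict Implicit. Unset Printing Implicit Defensive.
Import Order.TTheory GRing.Theory Num.Theory.

Fixpoint fibn_aux (k : nat) : nat * nat :=
  match k with
  | 0 => (0, 1)
  | k'.+1 => let: (a, b) := fibn_aux k' in (b, a + b)
  end%N.
Definition fibn (k : nat) : nat := (fibn_aux k).1.
Definition lucn (k : nat) : nat := (2 * fibn k.+1 - fibn k)%N. (* L_k = F_{k-1}+F_{k+1} = 2F_{k+1}-F_k *)

Local Open Scope ring_scope.

(* Extension to all integers: F_{-m} = (-1)^{m-1} F_m, L_{-m} = (-1)^m L_m.
   Negz k denotes -(k+1). *)
Definition Fib (z : int) : int :=
  match z with
  | Posz k => (fibn k)%:Z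
  | Negz k => (-1) ^+ k * (fibn k.+1)%:Z
  end.
Definition Luc (z : int) : int :=
  match z with
  | Posz k => (lucn k)%:Z
  | Negz k => (-1) ^+ k.+1 * (lucn k.+1)%:Z
  end.

Goal [seq fibn k | k <- iota 0 10] = [:: 0; 1; 1; 2; 3; 5; 8; 13; 21; 34]%N. Proof. by []. Qed.
Goal [seq lucn k | k <- iota 0 8] = [:: 2; 1; 3; 4; 7; 11; 18; 29]%N. Proof. by []. Qed.
Goal [seq Fib (Negz k) | k <- iota 0 5] = [:: 1; -1; 2; -3; 5]. Proof. by []. Qed.
Goal [seq Luc (Negz k) | k <- iota 0 5] = [:: -1; 3; -4; 7; -11]. Proof. by []. Qed.

(* Main.v *)
Require Import Defs.
From HB Require Import structures.
From mathcomp Require Import all_boot all_order all_algebra.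
From mathcomp Require Import ring lra zify.
Import Order.TTheory GRing.Theory Num.Theory.
Local Open Scope ring_scope.

Lemma fibn_S k : fibn k.+1 = (fibn_aux k).2.
Proof. by rewrite /fibn /=; case: (fibn_aux k). Qed.

Lemma fibn_SS k : fibn k.+2 = (fibn k.+1 + fibn k)%N.
Proof.
rewrite fibn_S /= fibn_S /fibn; case: (fibn_aux k) => a b /=.
by rewrite addnC.
Qed.

Lemma fibn_mono k : (fibn k <= fibn k.+1)%N.
Proof. case: k => [|k] //; rewrite fibn_SS; lia. Qed.

Lemma cassini k :
  (fibn k.+1)%:Z ^+ 2 - (fibn k.+1)%:Z * (fibn k)%:Z - (fibn k)%:Z ^+ 2
  = (-1) ^+ k.
Proof.
elim: k => [|k IH]; first by [].
rewrite fibn_SS PoszD (exprS (-1)) -IH; ring.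
Qed.

Lemma lucn_sq k : (lucn k)%:Z ^+ 2 = 5 * (fibn k)%:Z ^+ 2 + 4 * (-1) ^+ k.
Proof.
have H : (lucn k)%:Z = 2 * (fibn k.+1)%:Z - (fibn k)%:Z.
  rewrite /lucn subzn; last by have := fibn_mono k; lia.
  by [].
rewrite H -cassini; ring.
Qed.

Lemma key (r : int) :
  ((Luc r)%:~R : rat) ^+ 2 = 5 * (Fib r)%:~R ^+ 2 + (-1 : rat) ^ r * 4.
Proof.
case: r => k /=.
  rewrite -rmorphXn /= lucn_sq rmorphD !rmorphM /= !rmorphXn /= rmorphN1.
  change ((-1:rat) ^ (Posz k)) with ((-1:rat) ^+ k).
  rewrite [5%:~R]/intmul [4%:~R]/intmul; ring.
rewrite !rmorphM /= !rmorphXn /= rmorphN1 !exprMn -!exprM.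
rewrite !(mulnC _ 2) !exprM sqrrN !expr1n !mul1r -rmorphXn /= lucn_sq.
rewrite rmorphD !rmorphM /= !rmorphXn /= rmorphN1.
change ((-1:rat)^(Negz k)) with (((-1:rat)^+k.+1)^-1).
rewrite -exprVn invrN1.
rewrite [5%:~R]/intmul [4%:~R]/intmul; ring.
Qed.

Section Sums.
Variable a b : rat.
Definition T n := \sum_(0 <= j < n.+1) b ^+ j * a ^+ (n - j).
Definition S n := \sum_(0 <= j < n.+1)
   ((a + b) / 2) ^+ j * (a ^+ (n - j) + b ^+ (n - j)).

Lemma T_rec n : T n.+1 = a ^+ n.+1 + b * T n.
Proof.
rewrite /T big_nat_recl // subn0 expr0 mul1r big_distrr /=; congr (_ + _).
by apply: eq_bigr => j _; rewrite subSS exprS mulrA.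
Qed.

Lemma S_rec n : S n.+1 = a ^+ n.+1 + b ^+ n.+1 + ((a + b) / 2) * S n.
Proof.
rewrite /S big_nat_recl // subn0 expr0 mul1r big_distrr /=; congr (_ + _).
by apply: eq_bigr => j _; rewrite subSS exprS mulrA.
Qed.

Lemma T_geom n : (a - b) * T n = a ^+ n.+1 - b ^+ n.+1.
Proof.
elim: n => [|n IH]; first by rewrite /T big_nat1 subnn !expr0 mulr1 !expr1 mulr1.
rewrite T_rec mulrDr mulrCA IH !exprS; ring.
Qed.

Lemma S_T n : S n = 2 * T n.
Proof.
elim: n => [|n IH].
  by rewrite /S /T !big_nat1 subnn !expr0 !mulr1 mul1r.
rewrite S_rec IH T_rec.
have := T_geom n => G.
have -> : (a + b) / 2 * (2 * T n) = (a + b) * T n.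
  by field.
have -> : (a + b) * T n = 2 * b * T n + (a - b) * T n by ring.
rewrite G. set x := a ^+ n.+1. set y := b^+n.+1. set t := T n. ring.
Qed.
End Sums.

Lemma ab_neq (r : int) :
  5 * ((Fib r)%:~R : rat) ^+ 2 - (-1 : rat) ^ r * 4 != 0.
Proof.
set f := Fib r.
have [s [Hs Hs1]] : exists s : int, ((-1 : rat) ^ r = s%:~R) /\ (s = 1 \/ s = -1).
  case: r {f} => k.
    case: (odd k) / (boolP (odd k)) => Ho.
      exists (-1); split; last by right.
      change ((-1:rat)^(Posz k)) with ((-1:rat)^+k).
      by rewrite -signr_odd Ho expr1 rmorphN1.
    exists 1; split; last by left.
    change ((-1:rat)^(Posz k)) with ((-1:rat)^+k).
      by rewrite -signr_odd (negbTE Ho) expr0.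
  case: (boolP (odd k)) => Ho.
    exists 1; split; last by left.
    change ((-1:rat)^(Negz k)) with (((-1:rat)^+k.+1)^-1).
    by rewrite -signr_odd /= Ho /= expr0 invr1.
  exists (-1); split; last by right.
  change ((-1:rat)^(Negz k)) with (((-1:rat)^+k.+1)^-1).
    by rewrite -signr_odd /= (negbTE Ho) /= expr1 invrN1 rmorphN1.
rewrite Hs.
have -> : 5 * (f%:~R : rat) ^+ 2 - s%:~R * 4 = (5 * f ^+ 2 - s * 4)%:~R.
  by rewrite rmorphB rmorphM rmorphXn rmorphM /=.
rewrite intr_eq0.
clear Hs; clearbody f; rewrite expr2.
apply/eqP => H.
have [Hf|[Hf|Hf]] : f = 0 \/ 1 <= f \/ f <= -1 by lia.
- subst f; case: Hs1 => Hs1; subst s; lia.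
- case: Hs1 => Hs1; subst s; nia.
- case: Hs1 => Hs1; subst s; nia.
Qed.

Theorem theorem6 (r : int) (n : nat) :
  2 * \sum_(0 <= j < n.+1)
        (-1 : rat) ^ (r * j%:Z) * 4 ^+ j * (Fib r)%:~R ^+ (2 * n - 2 * j) * 5 ^+ (n - j)
  = \sum_(0 <= j < n.+1)
        ((Luc r)%:~R ^+ 2 / 2) ^+ j
        * (5 ^+ (n - j) * (Fib r)%:~R ^+ (2 * (n - j)) + (-1 : rat) ^ (r * (n - j)%:Z) * 4 ^+ (n - j))
  /\
  \sum_(0 <= j < n.+1)
        ((Luc r)%:~R ^+ 2 / 2) ^+ j
        * (5 ^+ (n - j) * (Fib r)%:~R ^+ (2 * (n - j)) + (-1 : rat) ^ (r * (n - j)%:Z) * 4 ^+ (n - j))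
  = 2 * (((5 * (Fib r)%:~R ^+ 2) ^+ n.+1 - (-1 : rat) ^ (r * n.+1%:Z) * 4 ^+ n.+1)
         / (5 * (Fib r)%:~R ^+ 2 - (-1 : rat) ^ r * 4)).
Proof.
set f : rat := (Fib r)%:~R.
set a := 5 * f ^+ 2.
set b := (-1 : rat) ^ r * 4.
have Ep : forall m : nat, (-1 : rat) ^ (r * m%:Z) * 4 ^+ m = b ^+ m.
  by move=> m; rewrite -exprz_exp exprMn.
have Ef : forall m : nat, 5 ^+ m * f ^+ (2 * m) = a ^+ m.
  by move=> m; rewrite exprMn exprM.
have E2 : S a b n = \sum_(0 <= j < n.+1)
        ((Luc r)%:~R ^+ 2 / 2) ^+ j
        * (5 ^+ (n - j) * f ^+ (2 * (n - j)) + (-1 : rat) ^ (r * (n - j)%:Z) * 4 ^+ (n - j)).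
  rewrite /S; apply: eq_bigr => j _; by rewrite key Ep Ef.
have E1 : T a b n = \sum_(0 <= j < n.+1)
        (-1 : rat) ^ (r * j%:Z) * 4 ^+ j * f ^+ (2 * n - 2 * j) * 5 ^+ (n - j).
  rewrite /T; apply: eq_bigr => j _; by rewrite Ep -mulnBr -mulrA [_ * 5 ^+ _]mulrC Ef.
rewrite -E1 -E2 Ep S_T; split => //.
congr (_ * _); apply: (canRL (mulfK (ab_neq r))).
by rewrite mulrC T_geom.
Qed.
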